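(* Under the standing assumptions, suppose moreover that $R$ is a Hirata separable extension of $R^\beta$. Then for all $g,h\in\mathcal G$ with $d(g)=r(h)$ one has $J_hJ_g=J_{gh}$ (where $J_hJ_g$ denotes the additive subgroup generated by all products $ab$ with $a\in J_h$, $b\in J_g$). In particular, $J_{g^{-1}}J_g=V_{E_g}(R)=\{r\in E_g: rx=xr\ \forall x\in R\}$ and $J_g\neq\{0\}$ for every $g\in\mathcal G$.
   Context: All rings and algebras are associative and unital. A groupoid is a nonempty set $\mathcal G$ with a partially defined associative multiplication in which every $g$ has an inverse $g^{-1}$, a left identity $r(g)=gg^{-1}$ and a right identity $d(g)=g^{-1}g$; $gh$ is defined iff $d(g)=r(h)$; $\mathcal G_0$ is the set of identities. Standing assumptions: $K$ commutative ring, $R$ a $K$-algebra, $\mathcal G$ a finite groupoid, $\beta=(\{E_g\},\{\beta_g\})$ a unital action of $\mathcal G$ on $R$: $E_g=E_{r(g)}$ is an ideal of $R$, unital with identity $1_g$ (so $1_{g^{-1}}=1_{d(g)}$), $\beta_g:E_{g^{-1}}\to E_g$ a $K$-algebra isomorphism, $\beta_e=\mathrm{id}_{E_e}$ for $e\in\mathcal G_0$, $\beta_g\beta_h(x)=\beta_{gh}(x)$ whenever $d(g)=r(h)$, $x\in E_{h^{-1}}$; $R=\bigoplus_{e\in\mathcal G_0}E_e$; and $R$ is a $\beta$-Galois extension of $R^\beta=\{r\in R:\beta_g(r1_{g^{-1}})=r1_g\ \forall g\in\mathcal G\}$: there exist $x_i,y_i\in R$ ($1\le i\le m$) with $\sum_i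 x_i\beta_g(y_i1_{g^{-1}})=1_g$ if $g\in\mathcal G_0$ and $=0$ otherwise. For $g\in\mathcal G$, $J_g=\{r\in E_g: r\beta_g(x1_{g^{-1}})=xr\ \forall x\in R\}$. A ring extension $R\supseteq S$ is Hirata separable if $R\otimes_S R$ is isomorphic, as an $R$-$R$-bimodule, to a direct summand of a finite direct sum of copies of $R$. *)

(* Defs.v *)
From HB Require Import structures.
From mathcomp Require Import all_boot all_order all_algebra.
Set Implicit Arguments. Unset Strict Implicit. Unset Printing Implicit Defensive.
Import GRing.Theory.
Local Open Scope ring_scope.

(* Finite groupoids.  The multiplication is a total function, but it is *)
(* only ever used (and only constrained) on composable pairs, i.e. when  *)
(* d(g) = r(h); this models the partially defined multiplication.        *)
Record groupoid := Groupoid {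
  gcar :> finType;
  gmul : gcar -> gcar -> gcar;
  ginv : gcar -> gcar }.

Definition gr (G : groupoid) (g : G) : G := gmul g (ginv g).
Definition gd (G : groupoid) (g : G) : G := gmul (ginv g) g.

Definition is_groupoid (G : groupoid) : Prop :=
  [/\ (0 < #|G|)%N,
      (forall g : G, ginv (ginv g) = g),
      (forall g h k : G, gd g = gr h -> gd h = gr k ->
          gmul (gmul g h) k = gmul g (gmul h k)),
      (forall g h : G, gd g = gr h ->
          gd (gmul g h) = gd h /\ gr (gmul g h) = gr g) &
      (forall g : G, gmul g (gd g) = g /\ gmul (gr g) g = g)].

Definition gid (G : groupoid) (e : G) : bool := gd e == e.

Definition is_K_algebra (K : comPzRingType) (R : pzRingType)
    (sc : K -> R -> R) : Prop :=
  [/\ (forall k x y, sc k (x + y) = sc k x + sc k y),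
      (forall k l x, sc (k + l) x = sc k x + sc l x),
      (forall k l x, sc (k * l) x = sc k (sc l x)),
      (forall x, sc 1 x = x) &
      (forall k x y, sc k (x * y) = sc k x * y /\ sc k (x * y) = x * sc k y)].

Definition is_ideal (R : pzRingType) (I : R -> Prop) : Prop :=
  [/\ I 0, (forall x y, I x -> I y -> I (x + y)), (forall x, I x -> I (- x)) &
      (forall a x, I x -> I (a * x) /\ I (x * a))].

Definition unital_action (K : comPzRingType) (R : pzRingType)
    (sc : K -> R -> R) (G : groupoid)
    (E : G -> R -> Prop) (one : G -> R) (beta : G -> R -> R) : Prop :=
  (forall g x, E g x <-> E (gr g) x) /\
  (forall g, is_ideal (E g) /\ E g (one g) /\
             (forall x, E g x -> one g * x = x /\ x * one g = x)) /\
  (forall g,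
     (forall x, E (ginv g) x -> E g (beta g x)) /\
     (forall x y, E (ginv g) x -> E (ginv g) y ->
        beta g (x + y) = beta g x + beta g y /\
        beta g (x * y) = beta g x * beta g y) /\
     (forall k x, E (ginv g) x -> beta g (sc k x) = sc k (beta g x)) /\
     (forall x y, E (ginv g) x -> E (ginv g) y -> beta g x = beta g y -> x = y) /\
     (forall y, E g y -> exists2 x, E (ginv g) x & beta g x = y)) /\
  (forall e, gid e -> forall x, E e x -> beta e x = x) /\
  (forall g h x, gd g = gr h -> E (ginv h) x ->
     beta g (beta h x) = beta (gmul g h) x) /\
  (forall x : R, exists f : G -> R,
     (forall e, gid e -> E e (f e)) /\ x = \sum_(e | gid e) f e) /\
  (forall f : G -> R, (forall e, gid e -> E e (f e)) ->
     \sum_(e | gid e) f e = 0 -> forall e, gid e -> f e = 0).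

Definition fixed_ring (R : pzRingType) (G : groupoid) (one : G -> R)
    (beta : G -> R -> R) (x : R) : Prop :=
  forall g : G, beta g (x * one (ginv g)) = x * one g.

Definition galois_ext (R : pzRingType) (G : groupoid) (one : G -> R)
    (beta : G -> R -> R) : Prop :=
  exists m (x y : 'I_m -> R), forall g : G,
    \sum_(i < m) x i * beta g (y i * one (ginv g)) = if gid g then one g else 0.

Definition Jset (R : pzRingType) (G : groupoid) (E : G -> R -> Prop)
    (one : G -> R) (beta : G -> R -> R) (g : G) (r : R) : Prop :=
  E g r /\ forall x : R, r * beta g (x * one (ginv g)) = x * r.

Definition prodgen (R : pzRingType) (A B : R -> Prop) (x : R) : Prop :=
  exists n (a b : 'I_n -> R) (z : 'I_n -> int),
    (forall i, A (a i) /\ B (b i)) /\ x = \sum_(i < n) (a i * b i) *~ z i.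

Record bimod (R : pzRingType) := Bimod {
  bm_car :> zmodType;
  bm_l : R -> bm_car -> bm_car;
  bm_r : bm_car -> R -> bm_car }.

Definition is_bimod (R : pzRingType) (M : bimod R) : Prop :=
  [/\ (forall a (m n : M), bm_l a (m + n) = bm_l a m + bm_l a n /\
                           bm_r (m + n) a = bm_r m a + bm_r n a),
      (forall a b (m : M), bm_l (a + b) m = bm_l a m + bm_l b m /\
                           bm_r m (a + b) = bm_r m a + bm_r m b),
      (forall a b (m : M), bm_l (a * b) m = bm_l a (bm_l b m) /\
                           bm_r m (a * b) = bm_r (bm_r m a) b),
      (forall m : M, bm_l 1 m = m /\ bm_r m 1 = m) &
      (forall a b (m : M), bm_l a (bm_r m b) = bm_r (bm_l a m) b)].

Definition bimod_hom (R : pzRingType) (M N : bimod R) (f : M -> N) : Prop :=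
  [/\ (forall m n, f (m + n) = f m + f n),
      (forall a m, f (bm_l a m) = bm_l a (f m)) &
      (forall a m, f (bm_r m a) = bm_r (f m) a)].

Definition sub_bimod (R : pzRingType) (M : bimod R) (P : M -> Prop) : Prop :=
  [/\ P 0, (forall m n, P m -> P n -> P (m + n)), (forall m, P m -> P (- m)) &
      (forall a m, P m -> P (bm_l a m) /\ P (bm_r m a))].

(* (M, t) is the tensor product R (x)_S R, with its R-R-bimodule structure,
   characterised by its universal property among S-balanced biadditive maps *)
Definition is_tensor (R : pzRingType) (S : R -> Prop) (M : bimod R)
    (t : R -> R -> M) : Prop :=
  is_bimod M /\
  (forall a b c, t (a + b) c = t a c + t b c /\ t a (b + c) = t a b + t a c) /\
  (forall a s b, S s -> t (a * s) b = t a (s * b)) /\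
  (forall c a b, bm_l c (t a b) = t (c * a) b /\ bm_r (t a b) c = t a (b * c)) /\
  (forall (A : zmodType) (phi : R -> R -> A),
     (forall a b c, phi (a + b) c = phi a c + phi b c /\
                    phi a (b + c) = phi a b + phi a c) ->
     (forall a s b, S s -> phi (a * s) b = phi a (s * b)) ->
     exists h : M -> A,
       ((forall m n, h (m + n) = h m + h n) /\ (forall a b, h (t a b) = phi a b)) /\
       (forall h' : M -> A, (forall m n, h' (m + n) = h' m + h' n) ->
          (forall a b, h' (t a b) = phi a b) -> forall m, h' m = h m)).

Definition rowbimod (R : pzRingType) (n : nat) : bimod R :=
  @Bimod R 'rV[R]_n (fun a v => \row_i (a * v 0 i)) (fun v b => \row_i (v 0 i * b)).

(* R is Hirata separable over S: R (x)_S R is isomorphic, as an R-R-bimodule,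
   to a direct summand of R^n for some n *)
Definition hirata_separable (R : pzRingType) (S : R -> Prop) : Prop :=
  exists (M : bimod R) (t : R -> R -> M), @is_tensor R S M t /\
  exists (n : nat) (P Q : rowbimod R n -> Prop) (f : M -> rowbimod R n),
    [/\ sub_bimod P, sub_bimod Q,
        (forall v, exists p q, [/\ P p, Q q & v = p + q]),
        (forall v, P v -> Q v -> v = 0) &
        [/\ bimod_hom f, (forall m m', f m = f m' -> m = m') &
            (forall v, P v <-> exists m, v = f m)]].

(* Main.v *)
Require Import Defs.
From HB Require Import structures.
From mathcomp Require Import all_boot all_order all_algebra.
Set Implicit Arguments. Unset Strict Implicit. Unset Printing Implicit Defensive.
Import GRing.Theory.
Local Open Scope ring_scope.

Section Grp.
Variable G : groupoid.
Hypothesis ginvK : forall g : G, ginv (ginv g) = g.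
Hypothesis gassoc : forall g h k : G, gd g = gr h -> gd h = gr k ->
          gmul (gmul g h) k = gmul g (gmul h k).
Hypothesis gcomp : forall g h : G, gd g = gr h ->
          gd (gmul g h) = gd h /\ gr (gmul g h) = gr g.
Hypothesis gunit : forall g : G, gmul g (gd g) = g /\ gmul (gr g) g = g.

Lemma gd_inv (g : G) : gd (ginv g) = gr g.
Proof. by rewrite /gd /gr ginvK. Qed.
Lemma gr_inv (g : G) : gr (ginv g) = gd g.
Proof. by rewrite /gd /gr ginvK. Qed.
Lemma gd_gd (g : G) : gd (gd g) = gd g.
Proof. by have [-> _] := gcomp (gd_inv g). Qed.
Lemma gr_gd (g : G) : gr (gd g) = gd g.
Proof. by have [_ ->] := gcomp (gd_inv g); rewrite gr_inv. Qed.
Lemma gid_gd (g : G) : gid (gd g).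
Proof. by rewrite /gid gd_gd. Qed.
Lemma gid_gr (g : G) : gid (gr g).
Proof. by rewrite -gd_inv gid_gd. Qed.
Lemma gid_r (e : G) : gid e -> gr e = e.
Proof. by move/eqP=> He; rewrite -{1}He gr_gd He. Qed.
Lemma gid_inv (e : G) : gid e -> ginv e = e.
Proof.
move=> He; have [H1 _] := gunit (ginv e).
by rewrite gd_inv (gid_r He) in H1; rewrite -H1; apply/eqP.
Qed.
Lemma gid_invE (k : G) : gid (ginv k) = gid k.
Proof.
apply/idP/idP => H; last by rewrite gid_inv.
by have := gid_inv H; rewrite ginvK => Hk; rewrite Hk.
Qed.
Lemma gd_mul (g h : G) : gd g = gr h -> gd (gmul g h) = gd h.
Proof. by move/gcomp => []. Qed.
Lemma gr_mul (g h : G) : gd g = gr h -> gr (gmul g h) = gr g.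
Proof. by move/gcomp => []. Qed.
Lemma gmul_invK (g h : G) : gd g = gr h -> gmul (ginv g) (gmul g h) = h.
Proof.
move=> H; rewrite -gassoc ?gd_inv //.
have -> : gmul (ginv g) g = gd g by [].
by rewrite H; have [_ ->] := gunit h.
Qed.
Lemma gmul_rinv (g : G) : gmul g (ginv g) = gr g.
Proof. by []. Qed.

Variable R : pzRingType.
Variables (E : G -> R -> Prop) (one : G -> R) (beta : G -> R -> R).
Hypothesis Er : forall g x, E g x <-> E (gr g) x.
Hypothesis Eid : forall g, is_ideal (E g).
Hypothesis Eone : forall g, E g (one g).
Hypothesis oneE : forall g x, E g x -> one g * x = x /\ x * one g = x.
Hypothesis bE : forall g x, E (ginv g) x -> E g (beta g x).
Hypothesis bDM : forall g x y, E (ginv g) x -> E (ginv g) y ->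
  beta g (x + y) = beta g x + beta g y /\ beta g (x * y) = beta g x * beta g y.
Hypothesis bsurj : forall g y, E g y -> exists2 x, E (ginv g) x & beta g x = y.
Hypothesis bid : forall e, gid e -> forall x, E e x -> beta e x = x.
Hypothesis bcomp : forall g h x, gd g = gr h -> E (ginv h) x ->
  beta g (beta h x) = beta (gmul g h) x.
Hypothesis dex : forall x : R, exists f : G -> R,
  (forall e, gid e -> E e (f e)) /\ x = \sum_(e | gid e) f e.
Hypothesis dun : forall f : G -> R, (forall e, gid e -> E e (f e)) ->
  \sum_(e | gid e) f e = 0 -> forall e, gid e -> f e = 0.

Lemma E0 g : E g 0. Proof. by case: (Eid g). Qed.
Lemma ED g x y : E g x -> E g y -> E g (x + y). Proof. by case: (Eid g) => _ H _ _; apply: H. Qed.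
Lemma EN g x : E g x -> E g (- x). Proof. by case: (Eid g) => _ _ H _; apply: H. Qed.
Lemma EMl g a x : E g x -> E g (a * x). Proof. by case: (Eid g) => _ _ _ H /(H a) []. Qed.
Lemma EMr g a x : E g x -> E g (x * a). Proof. by case: (Eid g) => _ _ _ H /(H a) []. Qed.
Lemma EB g x y : E g x -> E g y -> E g (x - y). Proof. by move=> ? ?; apply: ED => //; apply: EN. Qed.
Lemma Esum g (I : Type) (r : seq I) (P : pred I) (F : I -> R) :
  (forall i, P i -> E g (F i)) -> E g (\sum_(i <- r | P i) F i).
Proof.
move=> H; elim/big_rec: _ => [|i x Pi Ex]; first exact: E0.
by apply: ED => //; apply: H.
Qed.
Lemma Emuln g x n : E g x -> E g (x *+ n).
Proof. by move=> Hx; elim: n => [|n IH]; [rewrite mulr0n; exact: E0 | rewrite mulrS; exact: ED]. Qed.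
Lemma Emulz g x z : E g x -> E g (x *~ z).
Proof. by move=> Hx; case: z => n; rewrite /intmul; [apply: Emuln | apply/EN/Emuln]. Qed.

Lemma one_eq a b : (forall x, E a x <-> E b x) -> one a = one b.
Proof.
move=> H.
have h1 := proj1 (oneE (proj1 (H _) (Eone a))).
have h2 := proj2 (oneE (proj2 (H _) (Eone b))).
by rewrite -{1}h2 h1.
Qed.
Lemma one_gr g : one g = one (gr g). Proof. exact: one_eq. Qed.
Lemma E_inv g x : E (ginv g) x <-> E (gd g) x.
Proof. by have := Er (ginv g) x; rewrite gr_inv. Qed.
Lemma one_inv g : one (ginv g) = one (gd g).
Proof. by apply: one_eq => x; apply: E_inv. Qed.
Lemma Em1 g x : E g x -> x * one g = x. Proof. by case/oneE. Qed.
Lemma E1m g x : E g x -> one g * x = x. Proof. by case/oneE. Qed.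
Lemma Em1' g x : E g (x * one g). Proof. exact/EMl/Eone. Qed.
Lemma E1m' g x : E g (one g * x). Proof. exact/EMr/Eone. Qed.
Lemma one_idem g : one g * one g = one g. Proof. exact/Em1/Eone. Qed.

Lemma disj e f z : gid e -> gid f -> e != f -> E e z -> E f z -> z = 0.
Proof.
move=> He Hf nef Ez Fz.
pose F := fun k => if k == e then z else if k == f then - z else 0.
have HF : forall k, gid k -> E k (F k).
  move=> k _; rewrite /F; case: ifP => [/eqP -> //|_].
  case: ifP => [/eqP -> |_]; last exact: E0.
  exact: EN.
have fe : (f == e) = false by rewrite eq_sym (negbTE nef).
have S0 : \sum_(k | gid k) F k = 0.
  rewrite (bigD1 e) //= (bigD1 f) /=; last by rewrite Hf fe.
  rewrite big1 => [|k /andP[/andP[_ ke] kf]]; last by rewrite /F (negbTE ke) (negbTE kf).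
  by rewrite /F eqxx fe eqxx addr0 subrr.
by have := dun HF S0 He; rewrite /F eqxx.
Qed.

Lemma dec x : exists f : G -> R, (forall e, gid e -> E e (f e)) /\
  x = \sum_(e | gid e) f e /\
  forall e, gid e -> one e * x = f e /\ x * one e = f e.
Proof.
have [f [Hf Hx]] := dex x; exists f; split=> //; split=> // e He.
have Hk : forall k, gid k && (k != e) -> one e * f k = 0 /\ f k * one e = 0.
  move=> k /andP[Hk ke]; have ek : e != k by rewrite eq_sym.
  split; apply: (disj He Hk ek).
  - exact: E1m'.
  - by apply: EMl; apply: Hf.
  - by apply: EMl; apply: Eone.
  - by apply: EMr; apply: Hf.
rewrite Hx mulr_sumr mulr_suml !(bigD1 e He) /= !big1 ?addr0.
- by rewrite E1m ?Em1 //; apply: Hf.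
- by move=> k /Hk [].
- by move=> k /Hk [].
Qed.

Lemma cent_id e x : gid e -> one e * x = x * one e.
Proof. by move=> He; have [f [_ [_ /(_ e He) [-> ->]]]] := dec x. Qed.
Lemma cent g x : one g * x = x * one g.
Proof. by rewrite one_gr cent_id ?gid_gr. Qed.
Lemma sum_one x : \sum_(e | gid e) x * one e = x.
Proof.
have [f [_ [Hx H]]] := dec x.
by rewrite {2}Hx; apply: eq_bigr => e He; have [_ ->] := H e He.
Qed.

Lemma bD g x y : E (ginv g) x -> E (ginv g) y -> beta g (x + y) = beta g x + beta g y.
Proof. by move=> Hx Hy; case: (bDM Hx Hy). Qed.
Lemma bM g x y : E (ginv g) x -> E (ginv g) y -> beta g (x * y) = beta g x * beta g y.
Proof. by move=> Hx Hy; case: (bDM Hx Hy). Qed.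
Lemma b0 g : beta g 0 = 0.
Proof.
have h := bD (E0 (ginv g)) (E0 (ginv g)); rewrite addr0 in h.
by apply: (addrI (beta g 0)); rewrite -h addr0.
Qed.
Lemma bsum g (I : Type) (r : seq I) (P : pred I) (F : I -> R) :
  (forall i, P i -> E (ginv g) (F i)) ->
  beta g (\sum_(i <- r | P i) F i) = \sum_(i <- r | P i) beta g (F i).
Proof.
move=> H; elim: r => [|a r IH]; first by rewrite !big_nil b0.
rewrite !big_cons; case: ifP => Pa //.
by rewrite bD ?IH //; [apply: H | apply: Esum].
Qed.
Lemma b1 g : beta g (one (ginv g)) = one g.
Proof.
have [x Ex bx] := bsurj (Eone g).
have H : beta g (one (ginv g)) * one g = one g.
  by rewrite -{1}bx -bM ?Eone // E1m.
by rewrite -[RHS]H Em1 //; apply/bE/Eone.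
Qed.
Lemma Eb k a : E k (beta k (a * one (ginv k))).
Proof. exact/bE/Em1'. Qed.
Lemma split1 k a b : beta k (a * b * one (ginv k)) =
  beta k (a * one (ginv k)) * beta k (b * one (ginv k)).
Proof.
rewrite -bM; try exact: Em1'; congr (beta k _).
by rewrite -[RHS]mulrA (E1m (Em1' _ _)) mulrA.
Qed.

Definition Sfix s := forall g, beta g (s * one (ginv g)) = s * one g.

Lemma bS g a s : Sfix s -> beta g (a * one (ginv g)) * s = beta g (a * s * one (ginv g)).
Proof.
move=> Hs; by rewrite split1 Hs -(cent g s) mulrA (Em1 (Eb g a)).
Qed.

Definition tr r := \sum_(k : G) beta k (r * one (ginv k)).

Lemma tr_S r : Sfix (tr r).
Proof.
move=> m.
have L : beta m (tr r * one (ginv m)) =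
         \sum_(k | gd m == gr k) beta (gmul m k) (r * one (ginv k)).
  rewrite /tr mulr_suml bsum; last by move=> k _; apply: Em1'.
  rewrite [RHS]big_mkcond /=; apply: eq_bigr => k _.
  case: eqP => H.
    rewrite Em1; first by rewrite bcomp //; apply: Em1'.
    apply/E_inv; rewrite H; apply/(Er k); exact: Eb.
  rewrite (@disj (gr k) (gd m) (beta k (r * one (ginv k)) * one (ginv m))) ?b0 ?gid_gr ?gid_gd //.
  - by apply/eqP => H'; apply: H.
  - by apply/(Er k); apply: EMr; apply: Eb.
  - by apply/E_inv; apply: Em1'.
have Rr : tr r * one m = \sum_(l | gr l == gr m) beta l (r * one (ginv l)).
  rewrite /tr mulr_suml [RHS]big_mkcond /=; apply: eq_bigr => k _.
  case: eqP => H.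
    by rewrite (one_gr m) -H -(one_gr k) (Em1 (Eb k r)).
  rewrite (@disj (gr k) (gr m) (beta k (r * one (ginv k)) * one m)) ?gid_gr //.
  - by apply/eqP.
  - by apply/(Er k); apply: EMr; apply: Eb.
  - by apply/(Er m); apply: EMl; apply: Eone.
rewrite L Rr [RHS](reindex_onto (gmul m) (gmul (ginv m))) /=; last first.
  move=> l /eqP Hl; have := @gmul_invK (ginv m) l; rewrite ginvK; apply.
  by rewrite gd_inv Hl.
apply: eq_big => k.
  apply/eqP/andP => [H|[/eqP H1 /eqP H2]].
    by rewrite gr_mul // gmul_invK.
  rewrite -H2 gr_mul ?gr_inv //.
  by rewrite gd_inv.
move/eqP=> H; congr (beta _ (r * _)).
by rewrite !one_inv gd_mul.
Qed.

Variables (n : nat) (xs ys : 'I_n -> R).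
Hypothesis gal : forall g : G,
  \sum_(i < n) xs i * beta g (ys i * one (ginv g)) = if gid g then one g else 0.

Lemma sum_idE (F : G -> R) :
  \sum_(k : G) (if gid k then F k else 0) = \sum_(k | gid k) F k.
Proof. by rewrite [RHS]big_mkcond. Qed.

Lemma I1 r : \sum_(i < n) xs i * tr (ys i * r) = r.
Proof.
rewrite /tr; under eq_bigr do rewrite mulr_sumr.
rewrite exchange_big /=.
rewrite -[RHS]sum_one -sum_idE; apply: eq_bigr => k _.
under eq_bigr do rewrite split1 mulrA.
rewrite -mulr_suml gal; case: ifP => Hk; last by rewrite mul0r.
by rewrite (gid_inv Hk) (bid Hk (Em1' k r)) (E1m (Em1' k r)).
Qed.

Lemma gal2 k : \sum_(l < n) beta k (xs l * one (ginv k)) * ys l =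
  if gid k then one k else 0.
Proof.
have := gal (ginv k); rewrite ginvK gid_invE => H.
have H2 := congr1 (beta k) H.
have -> : (if gid k then one k else 0) = beta k (if gid k then one (ginv k) else 0).
  by case: ifP; rewrite ?b1 ?b0.
rewrite -H2 bsum; last first.
  by move=> i _; apply: EMl; apply: bE; rewrite ginvK; apply: Em1'.
apply: eq_bigr => l _.
have Eb' : E (ginv k) (beta (ginv k) (ys l * one k)).
  by apply: bE; rewrite ginvK; apply: Em1'.
rewrite -(E1m Eb') mulrA (bM (Em1' _ _) Eb').
rewrite bcomp ?gr_inv //; last by rewrite ginvK; apply: Em1'.
rewrite gmul_rinv (bid (gid_gr k) (proj1 (Er k _) (Em1' k (ys l)))).
by rewrite mulrA (Em1 (EMr _ (Eb k (xs l)))).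
Qed.

Lemma I2 r : \sum_(l < n) tr (r * xs l) * ys l = r.
Proof.
rewrite /tr; under eq_bigr do rewrite mulr_suml.
rewrite exchange_big /=.
rewrite -[RHS]sum_one -sum_idE; apply: eq_bigr => k _.
under eq_bigr do rewrite split1 -mulrA.
rewrite -mulr_sumr gal2; case: ifP => Hk; last by rewrite mulr0.
by rewrite (gid_inv Hk) (bid Hk (Em1' k r)) (Em1 (Em1' k r)).
Qed.

Lemma add0 (A B : zmodType) (h : A -> B) : (forall x y, h (x + y) = h x + h y) -> h 0 = 0.
Proof. by move=> H; apply: (addrI (h 0)); rewrite -H !addr0. Qed.
Lemma add_sum (A B : zmodType) (h : A -> B) (I : Type) (r : seq I) (Pr : pred I) (F : I -> A) :
  (forall x y, h (x + y) = h x + h y) ->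
  h (\sum_(i <- r | Pr i) F i) = \sum_(i <- r | Pr i) h (F i).
Proof. by move=> H; apply: big_morph; [exact: H | exact: add0]. Qed.
Lemma addN (A B : zmodType) (h : A -> B) x : (forall x y, h (x + y) = h x + h y) -> h (- x) = - h x.
Proof.
move=> H; apply/eqP; rewrite -subr_eq0 opprK -H addNr; exact/eqP/add0.
Qed.

Lemma key (hir : hirata_separable (fixed_ring one beta)) g :
  exists k (w u : 'I_k -> R),
    (forall j, Jset E one beta (ginv g) (w j) /\ Jset E one beta g (u j)) /\
    one g = \sum_(j < k) w j * u j.
Proof.
case: hir => M [t [[Mbi [tadd [tbal [tact tuniv]]]]]].
case=> k [P [Q [f [sP sQ PQ PQ0 [fhom finj fim]]]]].
case: Mbi => Madd Madd2 Mmul M1 Mlr.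
case: fhom => fadd fl fr.
pose phi := fun a b : R => a * beta g (b * one (ginv g)).
have ext : forall phi' : R -> R -> R,
    (forall a b c, phi' (a + b) c = phi' a c + phi' b c /\
                   phi' a (b + c) = phi' a b + phi' a c) ->
    (forall a s b, fixed_ring one beta s -> phi' (a * s) b = phi' a (s * b)) ->
    forall h1 h2 : M -> R, (forall x y, h1 (x + y) = h1 x + h1 y) ->
      (forall x y, h2 (x + y) = h2 x + h2 y) ->
      (forall a b, h1 (t a b) = phi' a b) -> (forall a b, h2 (t a b) = phi' a b) ->
      forall m, h1 m = h2 m.
  move=> phi' Hb Hs h1 h2 a1 a2 e1 e2 m.
  have [h0 [_ U]] := tuniv R phi' Hb Hs.
  by rewrite (U h1 a1 e1) (U h2 a2 e2).
have phiB : forall a b c, phi (a + b) c = phi a c + phi b c /\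
                          phi a (b + c) = phi a b + phi a c.
  move=> a b c; rewrite /phi mulrDl; split=> //.
  by rewrite mulrDl bD ?mulrDr //; apply: Em1'.
have phiS : forall a s b, fixed_ring one beta s -> phi (a * s) b = phi a (s * b).
  move=> a s b Hs; rewrite /phi split1 Hs -mulrA; congr (_ * _).
  by rewrite -mulrA (E1m (Eb g b)).
have [h [[hadd ht] _]] := tuniv R phi phiB phiS.
have hl : forall c m, h (bm_l c m) = c * h m.
  move=> c; apply: (ext (fun a b => phi (c * a) b)).
  - move=> a b d /=; rewrite mulrDr; split; [exact: (proj1 (phiB _ _ _)) | exact: (proj2 (phiB _ _ _))].
  - by move=> a s b Hs /=; rewrite mulrA; apply: phiS.
  - by move=> x y; rewrite (proj1 (Madd c x y)) hadd.
  - by move=> x y; rewrite hadd mulrDr.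
  - by move=> a b; rewrite (proj1 (tact c a b)) ht.
  - by move=> a b; rewrite ht /phi mulrA.
have hr : forall c m, h (bm_r m c) = h m * beta g (c * one (ginv g)).
  move=> c; apply: (ext (fun a b => phi a (b * c))).
  - move=> a b d /=; split; [exact: (proj1 (phiB _ _ _)) | ].
    by rewrite mulrDl; exact: (proj2 (phiB _ _ _)).
  - by move=> a s b Hs /=; rewrite -mulrA; apply: phiS.
  - by move=> x y; rewrite (proj2 (Madd c x y)) hadd.
  - by move=> x y; rewrite hadd mulrDl.
  - by move=> a b; rewrite (proj2 (tact c a b)) ht.
  - by move=> a b; rewrite ht /phi split1 mulrA.
have taddl : forall b x y, t (x + y) b = t x b + t y b.
  by move=> b x y; case: (tadd x y b).
have taddr : forall a x y, t a (x + y) = t a x + t a y.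
  by move=> a x y; case: (tadd a x y).
have tbal' : forall a r b, t a (tr r * b) = t (a * tr r) b.
  by move=> a r b; rewrite tbal //; apply: tr_S.
have bS' : forall a r, beta g (a * one (ginv g)) * tr r = beta g (a * tr r * one (ginv g)).
  by move=> a r; apply: bS; apply: tr_S.
pose q := \sum_(i < n) t (beta g (xs i * one (ginv g))) (ys i).
have q2 : forall c, bm_r q c = bm_l (beta g (c * one (ginv g))) q.
  move=> c.
  rewrite /q (add_sum _ _ _ (fun x y => proj2 (Madd c x y))).
  rewrite (add_sum _ _ _ (fun x y => proj1 (Madd _ x y))).
  under eq_bigr => i _.
    rewrite (proj2 (tact _ _ _)) -(I2 (ys i * c)).
    rewrite (add_sum _ _ _ (taddr _)).
    under eq_bigr => l _ do rewrite tbal'.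
    over.
  rewrite exchange_big /=; apply: eq_bigr => l _.
  rewrite -(add_sum _ _ _ (taddl _)) (proj1 (tact _ _ _)); congr (t _ _).
  under eq_bigr => i _ do rewrite bS' -(mulrA (ys i)).
  rewrite -bsum; last by move=> i _; apply: Em1'.
  by rewrite -mulr_suml I1 split1.
have hq : h q = one g.
  rewrite /q (add_sum _ _ _ hadd).
  under eq_bigr => i _ do rewrite ht /phi -split1.
  rewrite -bsum; last by move=> i _; apply: Em1'.
  rewrite -mulr_suml -[RHS]b1; congr (beta g _).
  have := gal (gd g); rewrite gid_gd (gid_inv (gid_gd g)) -one_inv => H.
  rewrite -[RHS]H mulr_suml.
  apply: eq_bigr => i _; rewrite -mulrA; congr (_ * _).
  have Ey : E (gd g) (ys i * one (ginv g)).
    by apply/E_inv; apply: Em1'.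
  by rewrite (bid (gid_gd g) Ey).
pose q' := bm_r q (one (ginv g)).
have hq' : h q' = one g.
  by rewrite /q' hr hq one_idem b1 one_idem.
have q'2 : forall c, bm_r q' c = bm_l (beta g (c * one (ginv g))) q'.
  move=> c; rewrite /q' -(proj2 (Mmul _ _ q)) cent (proj2 (Mmul _ _ q)) q2.
  by rewrite Mlr.
have q'1 : bm_r q' (one (ginv g)) = q'.
  by rewrite /q' -(proj2 (Mmul _ _ q)) one_idem.
pose eps (j : 'I_k) : 'rV[R]_k := \row_i ((i == j)%:R).
have radd : forall (v1 v2 : rowbimod R k), v1 + v2 = (v1 + v2 : 'rV[R]_k) by [].
have rl_add : forall c (v1 v2 : rowbimod R k),
    bm_l c (v1 + v2) = bm_l c v1 + bm_l c v2.
  by move=> c v1 v2; apply/rowP => i; rewrite !mxE mulrDr.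
have rr_add : forall c (v1 v2 : rowbimod R k),
    bm_r (v1 + v2) c = bm_r v1 c + bm_r v2 c.
  by move=> c v1 v2; apply/rowP => i; rewrite !mxE mulrDl.
have epsc : forall c j, bm_l c (eps j : rowbimod R k) = bm_r (eps j : rowbimod R k) c.
  by move=> c j; apply/rowP => i; rewrite !mxE; case: (i == j); rewrite ?mulr1 ?mul1r ?mulr0 ?mul0r.
have uniq : forall a b a' b' : rowbimod R k, P a -> Q b -> P a' -> Q b' ->
    a + b = a' + b' -> a = a'.
  move=> a b a' b' Pa Qb Pa' Qb' E1.
  have X : a - a' = b' - b.
    have -> : a - a' = (a + b) - (a' + b) by rewrite opprD addrACA subrr addr0.
    by rewrite E1 opprD addrACA subrr add0r.
  apply/eqP; rewrite -subr_eq0; apply/eqP; apply: PQ0.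
    by case: sP => _ Pp Pn _; apply: Pp => //; apply: Pn.
  by rewrite X; case: sQ => _ Qp Qn _; apply: Qp => //; apply: Qn.
have [mq Hmq] : exists mq : 'I_k -> M * rowbimod R k,
    forall j, Q (mq j).2 /\ eps j = f (mq j).1 + (mq j).2.
  apply: (@fin_all_exists _ (fun _ => (M * rowbimod R k)%type)
    (fun j (mq : (M * rowbimod R k)%type) => Q mq.2 /\ eps j = f mq.1 + mq.2)) => j.
  have [p [qq [Pp Qq ->]]] := PQ (eps j).
  have [m ->] := proj1 (fim p) Pp.
  by exists (m, qq).
pose m j := (mq j).1.
have mc : forall c j, bm_l c (m j) = bm_r (m j) c.
  move=> c j; apply: finj; rewrite fl fr.
  have [Qj Ej] := Hmq j.
  have := epsc c j; rewrite Ej rl_add rr_add.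
  apply: uniq.
  - by case: sP => _ _ _ Hp; apply: (proj1 (Hp _ _ _)); apply/fim; exists (m j).
  - by case: sQ => _ _ _ Hp; apply: (proj1 (Hp _ _ _)).
  - by case: sP => _ _ _ Hp; apply: (proj2 (Hp _ _ _)); apply/fim; exists (m j).
  - by case: sQ => _ _ _ Hp; apply: (proj2 (Hp _ _ _)).
pose w j := (f q') 0 j.
pose u j := h (m j).
exists k, w, u; split; last first.
  have vE : f q' = \sum_(j < k) bm_l (w j) (eps j : rowbimod R k).
    apply/rowP => i; rewrite summxE (bigD1 i) //= big1 => [|j ji].
      by rewrite !mxE eqxx mulr1 addr0.
    have ij : (i == j) = false by rewrite eq_sym (negbTE ji).
    by rewrite !mxE ij mulr0.
  have Qsum : forall (F : 'I_k -> rowbimod R k), (forall j, Q (F j)) -> Q (\sum_(j < k) F j).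
    move=> F HF; case: sQ => Q0 Qp _ _.
    by elim/big_rec: _ => // j x _ Qx; apply: Qp.
  have fs : f q' = \sum_(j < k) bm_l (w j) (f (m j)).
    apply: (@uniq _ 0 _ (\sum_(j < k) bm_l (w j) (mq j).2)).
    - by apply/fim; exists q'.
    - by case: sQ.
    - apply/fim; exists (\sum_(j < k) bm_l (w j) (m j)).
      by rewrite (add_sum _ _ _ fadd); apply: eq_bigr => j _; rewrite fl.
    - apply: Qsum => j; case: sQ => _ _ _ Hp; apply: (proj1 (Hp _ _ _)).
      exact: (proj1 (Hmq j)).
    rewrite addr0 {1}vE -big_split; apply: eq_bigr => j _.
    by rewrite (proj2 (Hmq j)) rl_add.
  have q'E : q' = \sum_(j < k) bm_l (w j) (m j).
    apply: finj; rewrite fs (add_sum _ _ _ fadd); apply: eq_bigr => j _.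
    by rewrite fl.
  by rewrite -hq' q'E (add_sum _ _ _ hadd); apply: eq_bigr => j _; rewrite hl.
have wc : forall c j, w j * c = beta g (c * one (ginv g)) * w j.
  move=> c j; have := congr1 (fun v : 'rV[R]_k => v 0 j) (congr1 f (q'2 c)).
  by rewrite fr fl /= !mxE.
have w1 : forall j, w j * one (ginv g) = w j.
  move=> j; have := congr1 (fun v : 'rV[R]_k => v 0 j) (congr1 f q'1).
  by rewrite fr /= !mxE.
have w1' : forall j, one g * w j = w j.
  by move=> j; rewrite -{2}w1 wc one_idem b1.
have u1 : forall j, u j * one g = u j.
  move=> j; rewrite /u -{2}(proj2 (M1 (m j))) hr.
  by rewrite mul1r b1.
move=> j; split; split.
- by rewrite -w1; apply: EMl; apply: Eone.
- move=> x; rewrite ginvK.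
  have Ex : E (ginv (ginv g)) (x * one g) by rewrite ginvK; apply: Em1'.
  have Ec := bE Ex.
  rewrite wc (Em1 Ec) bcomp ?gr_inv // gmul_rinv.
  rewrite (bid (gid_gr g) (proj1 (Er g _) (Em1' g x))).
  by rewrite -mulrA w1'.
- by rewrite -u1; apply: EMl; apply: Eone.
- by move=> x; rewrite /u -hr -hl mc.
Qed.

Notation J := (Jset E one beta).

Lemma Jprod g h a b : gd g = gr h -> J h a -> J g b -> J (gmul g h) (a * b).
Proof.
move=> Hgh [Ea Ja] [Eb0 Jb]; split.
  by apply/(Er (gmul g h)); rewrite gr_mul //; apply/(Er g); apply: EMl.
move=> x.
have oe : one (ginv (gmul g h)) = one (ginv h) by rewrite !one_inv gd_mul.
have Ey : E (ginv g) (beta h (x * one (ginv h))).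
  by apply/E_inv; rewrite Hgh; apply/(Er h); apply: Eb.
rewrite oe [RHS]mulrA -(Ja x) -[RHS]mulrA -(Jb (beta h (x * one (ginv h)))) (Em1 Ey) (bcomp Hgh (Em1' _ _)).
by rewrite mulrA.
Qed.

Lemma J0 g : J g 0.
Proof. by split; [apply: E0 | move=> x; rewrite mul0r mulr0]. Qed.
Lemma Jadd g a b : J g a -> J g b -> J g (a + b).
Proof.
move=> [Ea Ja] [Eb0 Jb]; split; first exact: ED.
by move=> x; rewrite mulrDl mulrDr Ja Jb.
Qed.
Lemma Jz g a z : J g a -> J g (a *~ z).
Proof.
move=> [Ea Ja]; split; first exact: Emulz.
by move=> x; rewrite mulrzAl mulrzAr Ja.
Qed.
Lemma Jsum g (I : Type) (r : seq I) (Pr : pred I) (F : I -> R) :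
  (forall i, Pr i -> J g (F i)) -> J g (\sum_(i <- r | Pr i) F i).
Proof.
move=> H; elim/big_rec: _ => [|i x Pi Jx]; first exact: J0.
by apply: Jadd => //; apply: H.
Qed.

Lemma prodJ g h x : gd g = gr h -> prodgen (J h) (J g) x -> J (gmul g h) x.
Proof.
move=> Hgh [k [a [b [z [Hab ->]]]]].
apply: Jsum => i _; apply: Jz; case: (Hab i) => Ha Hb; exact: Jprod.
Qed.

Lemma Jid g x : J (gr g) x <-> E g x /\ (forall y, x * y = y * x).
Proof.
have e1 : one (ginv (gr g)) = one g by rewrite (gid_inv (gid_gr g)) -one_gr.
have e2 : forall y, beta (gr g) (y * one g) = y * one g.
  by move=> y; apply: (bid (gid_gr g)); apply/(Er g); apply: Em1'.
split.
  move=> [Ex Jx]; have Ex' : E g x by apply/(Er g).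
  split=> // y; have := Jx y; rewrite e1 e2 => <-.
  by rewrite -cent mulrA (Em1 Ex').
move=> [Ex C]; split; first by apply/(Er g).
by move=> y; rewrite e1 e2 mulrA C -mulrA (Em1 Ex).
Qed.

Lemma main (hir : hirata_separable (fixed_ring one beta)) :
  [/\ (forall g h : G, gd g = gr h ->
         forall x, prodgen (J h) (J g) x <-> J (gmul g h) x),
      (forall (g : G) x, prodgen (J (ginv g)) (J g) x
                   <-> (E g x /\ forall y, x * y = y * x)) &
      (forall g : G, one g <> 0 -> exists x, J g x /\ x <> 0)].
Proof.
have P1 : forall g h : G, gd g = gr h ->
         forall x, prodgen (J h) (J g) x <-> J (gmul g h) x.
  move=> g h Hgh x; split; first exact: prodJ.
  move=> [Ex Jx].
  have [k [w [u [Hwu Hs]]]] := key hir g.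
  exists k, (fun j => x * w j), u, (fun _ => 1); split.
    move=> j; split; last exact: (proj2 (Hwu j)).
    rewrite -{1}(gmul_invK Hgh); apply: Jprod => //; last exact: (proj1 (Hwu j)).
    by rewrite gd_inv gr_mul.
  have Exg : E g x by apply/(Er g); rewrite -(gr_mul Hgh); apply/(Er (gmul g h)).
  rewrite -{1}(Em1 Exg) Hs mulr_sumr; apply: eq_bigr => j _.
  by rewrite mulr1z mulrA.
split=> //.
  move=> g x; have Hg : gd g = gr (ginv g) by rewrite gr_inv.
  exact: (iff_trans (P1 _ _ Hg x) (Jid g x)).
move=> g Hg.
have [k [w [u [Hwu Hs]]]] := key hir g.
have [j Hj|H0] := pickP (fun j => u j != 0).
  by exists (u j); split; [exact: (proj2 (Hwu j)) | apply/eqP].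
exfalso; apply: Hg; rewrite Hs big1 // => j _.
by have := H0 j; rewrite /= => /negbFE/eqP ->; rewrite mulr0.
Qed.

End Grp.

Theorem lemma3p4 (K : comPzRingType) (R : pzRingType) (sc : K -> R -> R)
    (G : groupoid) (E : G -> R -> Prop) (one : G -> R) (beta : G -> R -> R) :
  is_groupoid G ->
  is_K_algebra sc ->
  unital_action sc E one beta ->
  galois_ext one beta ->
  hirata_separable (fixed_ring one beta) ->
  [/\ (forall g h : G, gd g = gr h ->
         forall x, prodgen (Jset E one beta h) (Jset E one beta g) x
                   <-> Jset E one beta (gmul g h) x),
      (forall (g : G) x, prodgen (Jset E one beta (ginv g)) (Jset E one beta g) x
                   <-> (E g x /\ forall y, x * y = y * x)) &
      (forall g : G, one g <> 0 -> exists x, Jset E one beta g x /\ x <> 0)].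
Proof.
move=> [_ ginvK gassoc gcomp gunit] _.
move=> [Er [HE [Hb [bid [bcomp [dex dun]]]]]] [n [xs [ys gal]]] hir.
have Eid : forall g, is_ideal (E g) by move=> g; case: (HE g).
have Eone : forall g, E g (one g) by move=> g; case: (HE g) => _ [].
have oneE : forall g x, E g x -> one g * x = x /\ x * one g = x.
  by move=> g; case: (HE g) => _ [].
have bE : forall g x, E (ginv g) x -> E g (beta g x) by move=> g; case: (Hb g).
have bDM : forall g x y, E (ginv g) x -> E (ginv g) y ->
  beta g (x + y) = beta g x + beta g y /\ beta g (x * y) = beta g x * beta g y.
  by move=> g; case: (Hb g) => _ [].
have bsurj : forall g y, E g y -> exists2 x, E (ginv g) x & beta g x = y.
  by move=> g; case: (Hb g) => _ [_ [_ []]].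
exact: (main ginvK gassoc gcomp gunit Er Eid Eone oneE bE bDM bsurj bid bcomp dex dun gal hir).
Qed.
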